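(* In the setting of the context, let $j\ge1$ and $d\ge1$ be integers. Assume there exists $m\ge1$ with $2^{m-1}>j$ and $d\in\mathcal E_m$. Then there exist integers $\alpha,\beta$ with $\alpha-\beta=d$, $P_j(\{\alpha\})>0$ and $P_j(\{\beta\})>0$.
   Context: Let $\pi_m\ge2$ ($m\ge1$) be integers and $\eta_{m,i}\ge0$ ($m\ge1$, $0\le i\le\pi_m-1$) integers; write $\eta_m:i\mapsto\eta_{m,i}$. $\overline Y=\prod_{m\ge1}\{0,\dots,\pi_m-1\}$ with product uniform measure $\overline\nu$ and odometer $\overline S$ (add $1$ to the first coordinate with carry to the right). $\gamma(\overline y)=\sum_{m=1}^{\overline t(\overline y)}\eta_{m,\overline y_m}$ where $\overline t(\overline y)$ is the smallest $t\ge1$ with $\overline y_t<\pi_t-1$. $P_j$ is the distribution under $\overline\nu$ of $\gamma+\gamma\circ\overline S+\dots+\gamma\circ\overline S^{j-1}$. $\mathcal S_m=\eta_m(\{0,\dots,\pi_m-2\})\cup\big(\eta_{m,\pi_m-1}+\eta_{m+1}(\{0,\dots,\pi_{m+1}-2\})\big)$, $\mathcal E_m=\mathcal S_m-\mathcal S_m$. *)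

(* Defs.v *)
From Stdlib Require Import Reals ZArith.
From mathcomp Require Import all_boot.
Set Implicit Arguments. Unset Strict Implicit. Unset Printing Implicit Defensive.

(* Points of Ybar are sequences (y_1, y_2, ...); a cylinder is given by a
   finite prefix w = [:: y_m; y_{m+1}; ...] whose head has coordinate index m. *)

(* Odometer on a prefix starting at coordinate m: None if the carry leaves the
   prefix (then Sbar y is not determined by the prefix). *)
Fixpoint odo (pi : nat -> nat) (m : nat) (w : seq nat) : option (seq nat) :=
  match w with
  | [::] => None
  | y :: w' => if y.+1 < pi m then Some (y.+1 :: w')
               else omap (cons 0) (odo pi m.+1 w')
  end.

(* gamma on a prefix starting at coordinate m:
   sum_{k=m}^{t} eta_{k, y_k}, t the first index with y_t < pi_t - 1;
   None if no such t inside the prefix. *)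
Fixpoint gam (pi : nat -> nat) (eta : nat -> nat -> nat) (m : nat) (w : seq nat)
  : option nat :=
  match w with
  | [::] => None
  | y :: w' => if y.+1 < pi m then Some (eta m y)
               else omap (addn (eta m y)) (gam pi eta m.+1 w')
  end.

(* gamma + gamma o S + ... + gamma o S^(j-1) on a prefix (starting at coordinate 1),
   None if not determined by the prefix. *)
Fixpoint bsum (pi : nat -> nat) (eta : nat -> nat -> nat) (j : nat) (w : seq nat)
  : option nat :=
  match j with
  | 0 => Some 0
  | j'.+1 =>
    match gam pi eta 1 w with
    | None => None
    | Some g =>
      match j' with
      | 0 => Some g
      | _ => match odo pi 1 w with
             | None => None
             | Some w2 => omap (addn g) (bsum pi eta j' w2)
             end
      end
    end
  end.

Fixpoint prefixes (pi : nat -> nat) (m n : nat) : seq (seq nat) :=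
  match n with
  | 0 => [:: [::]]
  | n'.+1 => flatten [seq [seq y :: w | w <- prefixes pi m.+1 n'] | y <- iota 0 (pi m)]
  end.

Definition good_count (pi : nat -> nat) (eta : nat -> nat -> nat) (j : nat)
  (alpha : Z) (n : nat) : nat :=
  count (fun w => if bsum pi eta j w is Some s then Z.eqb (Z.of_nat s) alpha else false)
        (prefixes pi 1 n).

Lemma size_prefixes pi m n : size (prefixes pi m n) = \prod_(m <= k < m + n) pi k.
Proof.
elim: n m => [|n IH] m /=; first by rewrite addn0 big_geq.
rewrite size_flatten /shape -map_comp.
rewrite (eq_map (g := fun _ => \prod_(m.+1 <= k < m.+1 + n) pi k)); last first.
  by move=> y /=; rewrite size_map IH.
have mc (c : nat) (s : seq nat) : map (fun _ => c) s = nseq (size s) c.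
  by elim: s => //= a s ->.
rewrite mc sumn_nseq size_iota mulnC -addSnnS [in RHS]big_ltn //.
by rewrite ltnS leq_addr.
Qed.

(* Measure (under the uniform product measure) of the union of the length-n
   cylinders on which the sum equals alpha. *)
Definition approx_mass (pi : nat -> nat) (eta : nat -> nat -> nat) (j : nat)
  (alpha : Z) (n : nat) : R :=
  Rdiv (INR (good_count pi eta j alpha n)) (INR (\prod_(1 <= k < n.+1) pi k)).

Definition approx_set pi eta j alpha : R -> Prop :=
  fun r => exists n, r = approx_mass pi eta j alpha n.

Lemma approx_set_bound pi eta j alpha : bound (approx_set pi eta j alpha).
Proof.
exists R1 => r [n ->]; rewrite /approx_mass.
have Hc : (good_count pi eta j alpha n <= \prod_(1 <= k < n.+1) pi k)%N.
  by apply: leq_trans (count_size _ _) _; rewrite size_prefixes add1n.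
case: (eqVneq (\prod_(1 <= k < n.+1) pi k) 0%N) => Hp.
  by rewrite Hp /= Rdiv_def Rinv_0 Rmult_0_r; apply: Rle_0_1.
apply: (Rmult_le_reg_r (INR (\prod_(1 <= k < n.+1) pi k))).
  by apply: lt_0_INR; apply/ltP; rewrite lt0n.
rewrite Rmult_1_l Rdiv_def Rmult_assoc Rinv_l ?Rmult_1_r.
  by apply: le_INR; apply/leP.
by apply: not_0_INR; apply/eqP.
Qed.

Lemma approx_set_ne pi eta j alpha : exists x, approx_set pi eta j alpha x.
Proof. by exists (approx_mass pi eta j alpha 0); exists 0%N. Qed.

(* P_j({alpha}): the event {gamma + ... + gamma o S^(j-1) = alpha} is, up to a
   null set, the increasing union over n of the unions of length-n cylinders on
   which the sum is determined and equals alpha; its measure is the supremum. *)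
Definition Pj (pi : nat -> nat) (eta : nat -> nat -> nat) (j : nat) (alpha : Z) : R :=
  proj1_sig (completeness _ (approx_set_bound pi eta j alpha) (approx_set_ne pi eta j alpha)).

Definition in_Sm (pi : nat -> nat) (eta : nat -> nat -> nat) (m : nat) (x : Z) : Prop :=
  (exists i, (i.+1 < pi m)%N /\ x = Z.of_nat (eta m i)) \/
  (exists i, (i.+1 < pi m.+1)%N /\
             x = Z.of_nat (eta m (pi m).-1 + eta m.+1 i)).

Definition in_Em (pi : nat -> nat) (eta : nat -> nat -> nat) (m : nat) (x : Z) : Prop :=
  exists s1 s2, in_Sm pi eta m s1 /\ in_Sm pi eta m s2 /\ x = (s1 - s2)%Z.

(* Main.v *)
Require Import Defs.
From Stdlib Require Import Reals ZArith.
From mathcomp Require Import all_boot.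
From Stdlib Require Import Lia.
From mathcomp Require Import zify.

Fixpoint valid (pi : nat -> nat) a (w : seq nat) : bool :=
  if w is y :: w' then (y < pi a) && valid pi a.+1 w' else true.
Fixpoint val (pi : nat -> nat) a (w : seq nat) : nat :=
  if w is y :: w' then y + pi a * val pi a.+1 w' else 0.
Fixpoint pr (pi : nat -> nat) a L : nat :=
  if L is L'.+1 then pi a * pr pi a.+1 L' else 1.
Fixpoint mx (pi : nat -> nat) a L : seq nat :=
  if L is L'.+1 then (pi a).-1 :: mx pi a.+1 L' else [::].
Fixpoint cmx (pi : nat -> nat) (eta : nat -> nat -> nat) a L : nat :=
  if L is L'.+1 then eta a (pi a).-1 + cmx pi eta a.+1 L' else 0.

Lemma predS_lt n : (n.-1.+1 < n) = false.
Proof. by case: n => //= n; rewrite ltnn. Qed.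

Lemma odo_val pi a w w' : valid pi a w -> odo pi a w = Some w' ->
  [/\ valid pi a w', val pi a w' = (val pi a w).+1 & size w' = size w].
Proof.
elim: w a w' => [|y w IH] a w' //= /andP[Hy Hv].
case: ifP => Hlt.
  by move=> [<-] /=; rewrite Hlt Hv.
case Ho: (odo pi a.+1 w) => [w2|] //= [<-].
have [Hv2 Hval Hs] := IH _ _ Hv Ho.
have Hya : y.+1 = pi a by apply/eqP; rewrite eqn_leq Hy leqNgt Hlt.
split => //=; last by rewrite Hs.
  by rewrite Hv2 andbT (leq_ltn_trans (leq0n y) Hy).
rewrite Hval -Hya mulnS; lia.
Qed.

Lemma odo_none pi a w : valid pi a w -> odo pi a w = None ->
  (val pi a w).+1 = pr pi a (size w).
Proof.
elim: w a => [|y w IH] a //= /andP[Hy Hv].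
case: ifP => Hlt //.
case Ho: (odo pi a.+1 w) => [w2|] //= _.
rewrite -(IH _ Hv Ho).
have Hya : y.+1 = pi a by apply/eqP; rewrite eqn_leq Hy leqNgt Hlt.
rewrite -Hya mulSn; lia.
Qed.

Lemma gam_odo pi eta a w : isSome (gam pi eta a w) = isSome (odo pi a w).
Proof.
elim: w a => [|y w IH] a //=.
case: ifP => _ //.
by have := IH a.+1; case: (gam _ _ _ w); case: (odo _ _ w).
Qed.

Lemma gam_cat pi eta a u v g : gam pi eta a u = Some g -> gam pi eta a (u ++ v) = Some g.
Proof.
elim: u a g => [|y u IH] a g //=.
case: ifP => _ //.
by case E: (gam _ _ _ u) => [g'|] //= [<-]; rewrite (IH _ _ E).
Qed.

Lemma odo_cat pi a u v u' : odo pi a u = Some u' -> odo pi a (u ++ v) = Some (u' ++ v).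
Proof.
elim: u a u' => [|y u IH] a u' //=.
case: ifP => _; first by move=> [<-].
by case E: (odo _ _ u) => [u2|] //= [<-]; rewrite (IH _ _ E).
Qed.

Lemma gam_mx pi eta a L v :
  gam pi eta a (mx pi a L ++ v) = omap (addn (cmx pi eta a L)) (gam pi eta (a + L) v).
Proof.
elim: L a => [|L IH] a /=; first by rewrite addn0; case: gam.
by rewrite predS_lt IH addSnnS; case: gam => //= ?; rewrite addnA.
Qed.

Lemma odo_mx pi a L v :
  odo pi a (mx pi a L ++ v) = omap (cat (nseq L 0)) (odo pi (a + L) v).
Proof.
elim: L a => [|L IH] a /=; first by rewrite addn0; case: odo.
by rewrite predS_lt IH addSnnS; case: odo.
Qed.

Lemma valid_cat pi a u v : valid pi a (u ++ v) = valid pi a u && valid pi (a + size u) v.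
Proof.
elim: u a => [|y u IH] a /=; first by rewrite addn0.
by rewrite IH addSnnS andbA.
Qed.

Lemma size_mx pi a L : size (mx pi a L) = L.
Proof. by elim: L a => //= L IH a; rewrite IH. Qed.

Lemma valid_mx pi a L : (forall k, a <= k -> 0 < pi k) -> valid pi a (mx pi a L).
Proof.
elim: L a => //= L IH a H.
rewrite ltn_predL H // IH // => k Hk; apply: H; exact: ltnW.
Qed.

Lemma valid_nseq pi a L : (forall k, a <= k -> 0 < pi k) -> valid pi a (nseq L 0).
Proof.
elim: L a => //= L IH a H.
rewrite H // IH // => k Hk; apply: H; exact: ltnW.
Qed.

Lemma val_nseq pi a L : val pi a (nseq L 0) = 0.
Proof. by elim: L a => //= L IH a; rewrite IH muln0. Qed.

Lemma pr_ge pi a L : (forall k, a <= k -> 2 <= pi k) -> 2 ^ L <= pr pi a L.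
Proof.
elim: L a => //= L IH a H.
rewrite expnS; apply: leq_mul; first exact: H.
apply: IH => k Hk; apply: H; exact: ltnW.
Qed.

Lemma bsum_mid pi eta L k : forall u, valid pi 1 u -> size u = L ->
  val pi 1 u + k < pr pi 1 L ->
  exists g, forall v, bsum pi eta k (u ++ v) = Some g.
Proof.
elim: k => [|k IH] u Hv Hs Hb; first by exists 0.
have Hodo : odo pi 1 u <> None.
  by move=> Ho; have := @odo_none pi 1 u Hv Ho; rewrite Hs; lia.
have Hgam : gam pi eta 1 u <> None.
  by move=> Hg; apply: Hodo; have := gam_odo pi eta 1 u; rewrite Hg; case: odo.
case Eg: (gam pi eta 1 u) Hgam => [g0|] // _.
case Eo: (odo pi 1 u) Hodo => [u'|] // _.
have [Hv' Hval' Hs'] := @odo_val pi 1 u u' Hv Eo.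
have Hb' : val pi 1 u' + k < pr pi 1 L by rewrite Hval'; lia.
have [g Hg] := IH u' Hv' (etrans Hs' Hs) Hb'.
exists (g0 + g) => v /=.
rewrite (@gam_cat _ _ _ _ _ _ Eg).
case: k IH Hb Hb' Hg => [|k] IH Hb Hb' Hg.
  by have := Hg v => /= [[<-]]; rewrite addn0.
by rewrite (@odo_cat _ _ _ _ _ Eo) (Hg v).
Qed.

Lemma mem_prefixes pi a w : valid pi a w -> w \in prefixes pi a (size w).
Proof.
elim: w a => [|y w IH] a /=; first by rewrite inE.
move=> /andP[Hy Hv]; apply/flattenP.
exists [seq y :: w0 | w0 <- prefixes pi a.+1 (size w)].
  by apply/mapP; exists y; rewrite ?mem_iota.
by apply: map_f; exact: IH.
Qed.

Lemma Pj_pos pi eta j w s : (forall k, 1 <= k -> 0 < pi k) ->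
  valid pi 1 w -> bsum pi eta j w = Some s -> Rlt R0 (Pj pi eta j (Z.of_nat s)).
Proof.
move=> Hp Hv Hb.
have Hc : 0 < good_count pi eta j (Z.of_nat s) (size w).
  rewrite /good_count -has_count; apply/hasP; exists w; first exact: mem_prefixes.
  by rewrite Hb Z.eqb_refl.
rewrite /Pj; case: completeness => l [Hub _] /=.
apply: Rlt_le_trans (Hub _ (ex_intro _ (size w) erefl)).
rewrite /approx_mass; apply: Rdiv_lt_0_compat; apply: lt_0_INR; apply/ltP => //.
rewrite big_nat_cond; apply: (big_ind (fun x => 0 < x)) => //.
  by move=> x y Hx Hy; rewrite muln_gt0 Hx.
by move=> i /andP[/andP[Hi _] _]; apply: Hp.
Qed.

Lemma Sm_v pi eta m x : 0 < pi m -> in_Sm pi eta m x ->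
  exists v s v', [/\ valid pi m v, gam pi eta m v = Some s, odo pi m v = Some v'
                   & x = Z.of_nat s].
Proof.
move=> Hp [[i [Hi ->]]|[i [Hi ->]]].
- exists [:: i], (eta m i), [:: i.+1].
  by rewrite /= Hi andbT (ltnW Hi).
- exists [:: (pi m).-1; i], (eta m (pi m).-1 + eta m.+1 i), [:: 0; i.+1].
  by rewrite /= predS_lt Hi ltn_predL Hp (ltnW Hi).
Qed.

Lemma bsum_full pi eta L j' g v s v' :
  (forall v0, bsum pi eta j' (nseq L 0 ++ v0) = Some g) ->
  gam pi eta L.+1 v = Some s -> odo pi L.+1 v = Some v' ->
  bsum pi eta j'.+1 (mx pi 1 L ++ v) = Some (cmx pi eta 1 L + s + g).
Proof.
move=> Hg Hgam Hodo /=.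
rewrite gam_mx add1n Hgam /=.
case: j' Hg => [|j'] Hg.
  by have := Hg v' => /= [[<-]]; rewrite addn0.
rewrite odo_mx add1n Hodo /=; by move: (Hg v') => /= ->.
Qed.

Theorem mainTheorem16 (pi : nat -> nat) (eta : nat -> nat -> nat)
  (Hpi : forall m : nat, (1 <= m)%N -> (2 <= pi m)%N)
  (j : nat) (d : Z) (Hj : (1 <= j)%N) (Hd : (1 <= d)%Z)
  (Hm : exists m : nat, (1 <= m)%N /\ (j < 2 ^ (m - 1))%N /\ in_Em pi eta m d) :
  exists alpha beta : Z, (alpha - beta)%Z = d /\
    Rlt R0 (Pj pi eta j alpha) /\ Rlt R0 (Pj pi eta j beta).
Proof.
case: Hm => m [Hm1 [Hjm [x1 [x2 [H1 [H2 Hd']]]]]].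
have Hp1 : forall k, 1 <= k -> 0 < pi k.
  by move=> k /Hpi; apply: leq_trans.
case: m Hm1 Hjm H1 H2 => [|L] // _; rewrite subn1 /= => Hjm H1 H2.
case: j Hj Hjm => [|j'] // _ Hjm.
have Hpr := @pr_ge pi 1 L Hpi.
have Hb0 : val pi 1 (nseq L 0) + j' < pr pi 1 L by rewrite val_nseq; lia.
have [g Hg] := @bsum_mid pi eta L j' (nseq L 0) (valid_nseq pi 1 L Hp1)
                 (size_nseq _ _) Hb0.
have HpL : 0 < pi L.+1 by apply: Hp1.
have [v1 [t1 [v1' [Hv1 Hg1 Ho1 E1]]]] := @Sm_v pi eta L.+1 x1 HpL H1.
have [v2 [t2 [v2' [Hv2 Hg2 Ho2 E2]]]] := @Sm_v pi eta L.+1 x2 HpL H2.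
have Hval v : valid pi L.+1 v -> valid pi 1 (mx pi 1 L ++ v).
  by move=> Hv; rewrite valid_cat valid_mx // size_mx add1n.
exists (Z.of_nat (cmx pi eta 1 L + t1 + g)), (Z.of_nat (cmx pi eta 1 L + t2 + g)).
split; first by rewrite Hd' E1 E2; lia.
split.
  exact: (@Pj_pos pi eta j'.+1 _ _ Hp1 (Hval _ Hv1) (@bsum_full pi eta L j' g _ _ _ Hg Hg1 Ho1)).
exact: (@Pj_pos pi eta j'.+1 _ _ Hp1 (Hval _ Hv2) (@bsum_full pi eta L j' g _ _ _ Hg Hg2 Ho2)).
Qed.
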